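(* The classes of weakly Hausdorff spaces, of weakly Hausdorff compact spaces, of weakly Hausdorff sober spaces, and of weakly Hausdorff compact sober spaces are not $\omega$-projective. Moreover, there is an ep-system $(p_{mn}\colon X_n\to X_m)_{m\le n\in\mathbb N}$ of weakly Hausdorff compact sober spaces whose projective limit in the category of topological spaces is not weakly Hausdorff.
   Context: A projective system of topological spaces consists of a directed preordered set $(I,\sqsubseteq)$, spaces $X_i$ and continuous maps $p_{ij}\colon X_j\to X_i$ for $i\sqsubseteq j$ with $p_{ii}=\mathrm{id}$ and $p_{ij}\circ p_{jk}=p_{ik}$; its projective limit is its limit in the category of topological spaces. A class is $\omega$-projective if it is closed under projective limits of systems whose index set has a countable cofinal subset. The specialization preorder is $x\le y$ iff every open neighbourhood of $x$ contains $y$; $\uparrow x$ is the set of points above $x$. A space is weakly Hausdorff if for any two points $x,y$ and every open neighbourhood $W$ of $\uparrow x\cap\uparrow y$ there are open neighbourhoods $U$ of $x$ and $V$ of $y$ with $U\cap V\subseteq W$. Sober: $T_0$ and every irreducible closed set is the closure of a point. A continuous map $p\colon Y\to X$ is a projection if there is a continuous $e\colon X\to Y$ with $p\circ e=\mathrm{id}_X$ and $e\circ p\le\mathrm{id}_Y$ pointwise in the specialization preorder of $Y$; an ep-system is a projective system whose bonding maps $p_{ij}$ are projections. *)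

(* Defs.v *)
From HB Require Import structures.
From mathcomp Require Import all_boot all_order.
From mathcomp Require Import all_classical all_reals all_analysis.

Set Implicit Arguments.
Unset Strict Implicit.
Unset Printing Implicit Defensive.

Local Open Scope classical_set_scope.

Definition spec_le (T : topologicalType) (x y : T) : Prop :=
  forall U : set T, open U -> U x -> U y.

Definition upset (T : topologicalType) (x : T) : set T := [set y | spec_le x y].

Definition weakly_hausdorff (T : topologicalType) : Prop :=
  forall (x y : T) (W : set T), open W -> upset x `&` upset y `<=` W ->
    exists U V : set T, [/\ open U, U x, open V, V y & U `&` V `<=` W].

Definition compact_space (T : topologicalType) : Prop := compact [set: T].

Definition irreducible_closed (T : topologicalType) (A : set T) : Prop :=
  [/\ closed A, A !=set0 &
      forall B C : set T, closed B -> closed C -> A `<=` B `|` C ->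
        A `<=` B \/ A `<=` C].

Definition sober (T : topologicalType) : Prop :=
  @kolmogorov_space T /\
  forall A : set T, irreducible_closed A -> exists x : T, A = closure [set x].

Unset Implicit Arguments.

Definition directed_preorder (I : Type) (le : I -> I -> Prop) : Prop :=
  [/\ inhabited I, (forall i, le i i),
      (forall i j k, le i j -> le j k -> le i k) &
      (forall i j, exists k, le i k /\ le j k)].

(* Projective system: the bonding map [p i j : X j -> X i] is only
   meaningful (and only constrained) when [le i j]. *)
Definition projective_system (I : Type) (le : I -> I -> Prop)
    (X : I -> topologicalType) (p : forall i j : I, X j -> X i) : Prop :=
  [/\ directed_preorder I le,
      (forall i j, le i j -> continuous (p i j)),
      (forall i (x : X i), p i i x = x) &
      (forall i j k, le i j -> le j k -> forall x : X k,
          p i j (p j k x) = p i k x)].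

Definition is_projective_limit (I : Type) (le : I -> I -> Prop)
    (X : I -> topologicalType) (p : forall i j : I, X j -> X i)
    (L : topologicalType) (pi : forall i : I, L -> X i) : Prop :=
  [/\ (forall i, continuous (pi i)),
      (forall i j, le i j -> forall l : L, p i j (pi j l) = pi i l) &
      (forall (Z : topologicalType) (q : forall i : I, Z -> X i),
          (forall i, continuous (q i)) ->
          (forall i j, le i j -> forall z : Z, p i j (q j z) = q i z) ->
          exists! u : Z -> L, continuous u /\ forall i z, pi i (u z) = q i z)].

Definition has_countable_cofinal (I : Type) (le : I -> I -> Prop) : Prop :=
  exists J : set I, countable J /\ forall i, exists2 j, J j & le i j.

Definition omega_projective (C : topologicalType -> Prop) : Prop :=
  forall (I : Type) (le : I -> I -> Prop) (X : I -> topologicalType)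
         (p : forall i j : I, X j -> X i),
    projective_system I le X p -> has_countable_cofinal I le ->
    (forall i, C (X i)) ->
    forall (L : topologicalType) (pi : forall i, L -> X i),
      is_projective_limit I le X p L pi -> C L.

Definition is_projection (Y X : topologicalType) (p : Y -> X) : Prop :=
  continuous p /\
  exists e : X -> Y, [/\ continuous e, (forall x, p (e x) = x) &
                         (forall y, spec_le (e (p y)) y)].

Definition ep_system (I : Type) (le : I -> I -> Prop)
    (X : I -> topologicalType) (p : forall i j : I, X j -> X i) : Prop :=
  projective_system I le X p /\ forall i j, le i j -> is_projection (X j) (X i) (p i j).

(* Main.v *)
Require Import Defs.
From HB Require Import structures.
From mathcomp Require Import all_boot all_order.
From mathcomp Require Import all_classical all_reals all_analysis.
Set Implicit Arguments. Unset Strict Implicit. Unset Printing Implicit Defensive.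
Local Open Scope classical_set_scope.

Inductive pt (n : nat) : Type := PA of 'I_n.+1 | PB | PD of nat.
Arguments PB {n}. Arguments PA {n}. Arguments PD {n}.

Definition lept n (x y : pt n) : Prop :=
  match x, y with
  | PA i, PA j => (i <= j)%N
  | PA i, PD k => (i <= k)%N
  | PB, PB => True
  | PB, PD _ => True
  | PD k, PD l => k = l
  | _, _ => False
  end.

Lemma lept_refl n (x : pt n) : lept x x.
Proof. by case: x => //=. Qed.

Lemma lept_trans n (x y z : pt n) : lept x y -> lept y z -> lept x z.
Proof.
case: x => [i||k]; case: y => [j||l]; case: z => [m||o] //=;
  try (by move=> *; subst); try (by apply: leq_trans).

Qed.

Lemma lept_anti n (x y : pt n) : lept x y -> lept y x -> x = y.
Proof.
case: x; case: y => //=.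
- by move=> i j h1 h2; congr PA; apply: val_inj; apply/eqP; rewrite eqn_leq h1 h2.
- by move=> ? ? ->.
Qed.

HB.instance Definition _ n := gen_eqMixin (pt n).
HB.instance Definition _ n := gen_choiceMixin (pt n).

Definition ptnbhs n (x : pt n) : set_system (pt n) :=
  [set B | forall y, lept x y -> B y].

HB.instance Definition _ n := hasNbhs.Build (pt n) (@ptnbhs n).

Lemma ptnbhs_filter n (x : pt n) : ProperFilter (@ptnbhs n x).
Proof.
have FF : Filter (@ptnbhs n x).
  split.
  - by [].
  - by move=> P Q HP HQ y hy; split; [apply: HP|apply: HQ].
  - by move=> P Q PQ HP y hy; apply/PQ/HP.
split; last exact: FF.
by move=> /(_ x (lept_refl x)).
Qed.

HB.instance Definition _ n := Nbhs_isNbhsTopological.Build (pt n)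
  (@ptnbhs_filter n)
  (fun x A (h : ptnbhs x A) => h x (lept_refl x))
  (fun x A (h : ptnbhs x A) => fun y hy z hz => h z (lept_trans hy hz)).

Definition X (n : nat) : topologicalType := pt n.

Lemma nbhsX n (x : X n) B : nbhs x B <-> forall y, lept x y -> B y.
Proof. by []. Qed.

Lemma openX n (A : set (X n)) : open A <-> forall x y, A x -> lept x y -> A y.
Proof.
rewrite openE; split.
  by move=> h x y Ax; apply: (h x Ax).
by move=> h x Ax; rewrite /interior; apply/nbhsX => y; apply: h.
Qed.


Lemma specX n (x y : X n) : spec_le x y <-> lept x y.
Proof.
split.
  move=> h; apply: (h [set z | lept x z]); last exact: lept_refl.
  by apply/openX => a b /= h1 h2; apply: lept_trans h1 h2.
by move=> h U /openX oU Ux; apply: oU Ux h.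
Qed.

Lemma mono_cont m n (f : X m -> X n) :
  (forall x y, lept x y -> lept (f x) (f y)) -> continuous f.
Proof.
by move=> mf x B /nbhsX hB; apply/nbhsX => y hy; apply/hB/mf.
Qed.

Lemma WH_X n : weakly_hausdorff (X n).
Proof.
move=> x y W oW sW.
exists [set z | lept x z], [set z | lept y z]; split.
- by apply/openX => a b /= h1 h2; apply: lept_trans h1 h2.
- exact: lept_refl.
- by apply/openX => a b /= h1 h2; apply: lept_trans h1 h2.
- exact: lept_refl.
- by move=> z [h1 h2]; apply: sW; split; apply/specX.
Qed.

Lemma compact_X n : compact_space (X n).
Proof.
rewrite /compact_space /compact => F PF _.
case: (pselect (cluster F (PA ord0 : X n))) => [c0|nc0]; first by exists (PA ord0).
case: (pselect (cluster F (PB : X n))) => [c1|nc1]; first by exists PB.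
have [A1 [B1 [FA1 nB1 e1]]] : exists A B, [/\ F A, nbhs (PA ord0 : X n) B & ~ (A `&` B !=set0)].
  apply: contrapT => h; apply: nc0 => A B FA nB; apply: contrapT => hh; apply: h.
  by exists A, B.
have [A2 [B2 [FA2 nB2 e2]]] : exists A B, [/\ F A, nbhs (PB : X n) B & ~ (A `&` B !=set0)].
  apply: contrapT => h; apply: nc1 => A B FA nB; apply: contrapT => hh; apply: h.
  by exists A, B.
exfalso; apply: (filter_not_empty F); apply: filterS (filterI FA1 FA2).
move=> z [z1 z2]; case: z z1 z2 => [i||k] z1 z2.
- by apply: e1; exists (PA i); split => //; apply: nB1.
- by apply: e2; exists PB; split => //; apply: nB2.
- by apply: e2; exists (PD k); split => //; apply: nB2.
Qed.

Lemma closedX_down n (A : set (X n)) : closed A -> forall x y, lept x y -> A y -> A x.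
Proof.
move=> cA x y hxy Ay; apply: cA => B /nbhsX nB; exists y; split => //; exact: nB.
Qed.

Lemma down_closedX n (A : set (X n)) : (forall x y, lept x y -> A y -> A x) -> closed A.
Proof.
move=> hA v cv; have [w [Aw vw]] := cv [set z | lept v z] (fun z h => h).
exact: hA vw Aw.
Qed.

Lemma closure1X n (m : X n) : closure [set m] = [set v | lept v m].
Proof.
apply/seteqP; split => v.
  by move=> cv; have [w [-> vw]] := cv [set z | lept v z] (fun z h => h).
by move=> vm B /nbhsX nB; exists m; split => //; exact: nB.
Qed.

Lemma max_exists (P : nat -> Prop) N i : P i -> (forall k, P k -> (k <= N)%N) ->
  exists j, P j /\ forall k, P k -> (k <= j)%N.
Proof.
move=> Pi hN.
have ex : exists k, `[< P k >] by exists i; apply/asboolP.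
have bd : forall k, `[< P k >] -> (k <= N)%N by move=> k /asboolP; apply: hN.
case: (ex_maxnP ex bd) => j /asboolP Pj hj.
by exists j; split => // k Pk; apply: hj; apply/asboolP.
Qed.

Lemma maximal_X n (A : set (X n)) : A !=set0 ->
  exists m, A m /\ forall v, A v -> lept m v -> v = m.
Proof.
move=> [x0 Ax0].
case: (pselect (exists k, A (PD k))) => [[k Ak]|nD].
  by exists (PD k); split => // v Av; case: v Av => //= l _ ->.
case: (pselect (A PB)) => [AB|nB].
  exists PB; split => // v Av; case: v Av => //= l Al _.
  by exfalso; apply: nD; exists l.
have [i0 Ai0] : exists i, A (PA i).
  case: x0 Ax0 => [i||k] h; [by exists i| by []| by exfalso; apply: nD; exists k].
pose P := fun k => exists h : (k < n.+1)%N, A (PA (Ordinal h)).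
have [j [[hj Aj] jmax]] : exists j, P j /\ forall k, P k -> (k <= j)%N.
  apply: (@max_exists P n i0).
    by exists (ltn_ord i0); rewrite (_ : Ordinal _ = i0) //; apply: val_inj.
  by move=> k [h _].
exists (PA (Ordinal hj)); split => // v Av; case: v Av => [i||k] //= Av hi.
  congr PA; apply: val_inj => /=; apply/eqP; rewrite eqn_leq hi andbT.
  by apply: jmax; exists (ltn_ord i); rewrite (_ : Ordinal _ = i) //; apply: val_inj.
by exfalso; apply: nD; exists k.
Qed.

Lemma sober_X n : sober (X n).
Proof.
split.
  move=> x y /eqP nxy.
  case: (pselect (lept x y)) => hxy.
    exists [set z | lept y z]; right; split.
      by rewrite inE; apply/nbhsX.
    rewrite inE /=; move=> hyx; exact/nxy/lept_anti.
  exists [set z | lept x z]; left; split.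
    by rewrite inE; apply/nbhsX.
  by rewrite inE.
move=> A [cA nA irr].
have [m [Am mmax]] := maximal_X nA.
exists m; rewrite closure1X.
have dA := closedX_down cA.
have : A `<=` [set v | lept v m] \/ A `<=` [set v | A v /\ ~ lept m v].
  apply: irr.
  - by rewrite -closure1X; apply: closed_closure.
  - apply: down_closedX => x y hxy [Ay nmy]; split; first exact: dA hxy Ay.
    by move=> hmx; apply: nmy; apply: lept_trans hmx hxy.
  - move=> v Av; case: (pselect (lept m v)) => h.
      by left; rewrite (mmax v Av h); apply: lept_refl.
    by right.
case=> sub.
  apply/seteqP; split => // v vm; exact: dA vm Am.
by exfalso; have [_ ] := sub m Am; apply; apply: lept_refl.
Qed.

From mathcomp Require Import zify.

Lemma clamp_proof i m : (minn i m < m.+1)%N.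
Proof. lia. Qed.

Definition clamp m (i : nat) : 'I_m.+1 := Ordinal (clamp_proof i m).

Definition pmap m n (x : X n) : X m :=
  match x with PA i => PA (clamp m i) | PB => PB | PD k => PD k end.

Lemma pmap_mono m n (x y : X n) : lept x y -> lept (pmap m x) (pmap m y).
Proof. case: x => [i||k]; case: y => [j||l] //=; lia. Qed.

Lemma pmap_id i (x : X i) : pmap i x = x.
Proof.
case: x => [a||k] //=; congr PA; apply: val_inj => /=; have := ltn_ord a; lia.
Qed.

Lemma pmap_comp i j k (x : X k) : (i <= j)%N -> pmap i (pmap j x) = pmap i x.
Proof. case: x => [a||l] //= h; congr PA; apply: val_inj => /=; lia. Qed.

Lemma pmap_section i j (x : X i) : (i <= j)%N -> pmap i (pmap j x) = x.
Proof.
case: x => [a||l] //= h; congr PA; apply: val_inj => /=; have := ltn_ord a; lia.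
Qed.

Lemma pmap_below i j (y : X j) : (i <= j)%N -> lept (pmap j (pmap i y)) y.
Proof. case: y => [a||l] //= h; lia. Qed.

Definition Lpred (s : forall n, X n) : Prop := forall m n, (m <= n)%N -> pmap m (s n) = s m.
Definition Lt := {s : forall n, X n | Lpred s}.

HB.instance Definition _ := gen_eqMixin Lt.
HB.instance Definition _ := gen_choiceMixin Lt.

Definition Lnbhs (s : Lt) : set_system Lt :=
  [set B | exists n, forall t : Lt, lept (sval s n) (sval t n) -> B t].

HB.instance Definition _ := hasNbhs.Build Lt Lnbhs.

Lemma Lt_down (s t : Lt) m n : (m <= n)%N -> lept (sval s n) (sval t n) ->
  lept (sval s m) (sval t m).
Proof.
move=> mn h; rewrite -(svalP s m n mn) -(svalP t m n mn); exact: pmap_mono.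
Qed.

Lemma Lnbhs_filter (s : Lt) : ProperFilter (Lnbhs s).
Proof.
have FF : Filter (Lnbhs s).
  split.
  - by exists 0%N.
  - move=> P Q [n1 h1] [n2 h2]; exists (maxn n1 n2) => t ht; split.
      by apply: h1; apply: Lt_down ht; apply: leq_maxl.
    by apply: h2; apply: Lt_down ht; apply: leq_maxr.
  - by move=> P Q PQ [n h]; exists n => t ht; apply/PQ/h.
split; last exact: FF.
by move=> [n /(_ s (lept_refl _))].
Qed.

HB.instance Definition _ := Nbhs_isNbhsTopological.Build Lt
  Lnbhs_filter
  (fun x A (h : Lnbhs x A) => let: ex_intro n hn := h in hn x (lept_refl _))
  (fun x A (h : Lnbhs x A) => let: ex_intro n hn := h in
      ex_intro _ n (fun y hy => ex_intro _ n (fun z hz => hn z (lept_trans hy hz)))).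

Definition L : topologicalType := Lt.
Definition pi n (s : L) : X n := sval s n.

Lemma nbhsL (s : L) B : nbhs s B <-> exists n, forall t : L, lept (pi n s) (pi n t) -> B t.
Proof. by []. Qed.

Lemma open_cyl n (a : X n) : open [set t : L | lept a (pi n t)].
Proof.
rewrite openE => s hs; rewrite /interior; apply/nbhsL; exists n => t ht /=.
exact: lept_trans hs ht.
Qed.

Lemma limit_L : is_projective_limit nat (fun m n : nat => (m <= n)%N) X
   (fun m n => @pmap m n) L pi.
Proof.
split.
- move=> i s B /nbhsX hB; apply/nbhsL; exists i => t ht; exact: hB.
- by move=> i j ij l; rewrite /pi (svalP l i j ij).
move=> Z q qc qcomp.
have hq : forall z, (forall m n, (m <= n)%N -> pmap m (q n z) = q m z).
  by move=> z m n mn; apply: qcomp.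
exists (fun z => exist Lpred (fun n => q n z) (hq z) : L); split.
  split => //.
  move=> z B /nbhsL [n hn].
  have := qc n z [set y | lept (q n z) y] (fun y h => h).
  move=> h; apply: (@filterS _ (nbhs z) _ (q n @^-1` [set y | lept (q n z) y]) _ _ h).
  by move=> y /= hy; exact: hn.
move=> u [uc hu]; apply: funext => z.
have : forall i, pi i (u z) = q i z by move=> i; apply: hu.
case: (u z) => s sp /= hs; apply: eq_exist.
by apply: functional_extensionality_dep => n; rewrite -hs.
Qed.

Lemma xs_proof : forall m n, (m <= n)%N ->
  pmap m (PA (ord_max : 'I_n.+1) : X n) = (PA (ord_max : 'I_m.+1) : X m).
Proof. move=> m n mn /=; congr PA; apply: val_inj => /=; lia. Qed.

Definition xs : L := exist Lpred (fun n => PA (ord_max : 'I_n.+1) : X n) xs_proof.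
Definition ys : L := exist Lpred (fun n => PB : X n) (fun m n _ => erefl).
Definition ds (k : nat) : L := exist Lpred (fun n => PD k : X n) (fun m n _ => erefl).

Lemma open_nbhsL (U : set L) s : open U -> U s -> nbhs s U.
Proof. by rewrite openE => oU Us; apply: oU. Qed.

Lemma notWH_L : ~ weakly_hausdorff L.
Proof.
move=> wh.
have sub : upset xs `&` upset ys `<=` set0.
  move=> z [hx0 hy0]; have hx : spec_le xs z := hx0; have hy : spec_le ys z := hy0.
  have hxn : forall n, lept (PA (ord_max : 'I_n.+1) : X n) (pi n z).
    by move=> n; exact: (hx _ (@open_cyl n (PA (ord_max : 'I_n.+1))) (lept_refl _)).
  have hyn : forall n, lept (PB : X n) (pi n z).
    by move=> n; exact: (hy _ (@open_cyl n PB) (lept_refl _)).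
  have : exists k, pi 0 z = PD k.
    move: (hxn 0%N) (hyn 0%N); case: (pi 0 z) => [i||k] //= _ _; by exists k.
  case=> k hk.
  have c0 := svalP z 0%N k.+1 isT.
  move: (hxn k.+1) (hyn k.+1) c0; rewrite /pi in hk *; rewrite hk.
  case: (sval z k.+1) => [i||l] //= h1 _ [e]; lia.
have [U [V [oU Ux oV Vy sUV]]] := wh xs ys set0 open0 sub.
have [n1 h1] := (proj1 (@nbhsL _ _)) (open_nbhsL oU Ux).
have [n2 h2] := (proj1 (@nbhsL _ _)) (open_nbhsL oV Vy).
apply: (sUV (ds n1)); split.
  by apply: h1 => /=.
by apply: h2.
Qed.

Theorem corollary5p5 :
  [/\ ~ omega_projective weakly_hausdorff,
      ~ omega_projective (fun T => weakly_hausdorff T /\ compact_space T),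
      ~ omega_projective (fun T => weakly_hausdorff T /\ sober T),
      ~ omega_projective
          (fun T => [/\ weakly_hausdorff T, compact_space T & sober T]) &
      exists (X : nat -> topologicalType) (p : forall m n : nat, X n -> X m),
        [/\ ep_system nat (fun m n : nat => (m <= n)%N) X p,
            (forall n, [/\ weakly_hausdorff (X n), compact_space (X n)
                         & sober (X n)]) &
            exists (L : topologicalType) (pi : forall n, L -> X n),
              is_projective_limit nat (fun m n : nat => (m <= n)%N) X p L pi /\
              ~ weakly_hausdorff L]].
Proof.
have ep : ep_system nat (fun m n : nat => (m <= n)%N) X (fun m n => @pmap m n).
  split.
    split.
    - split.
      + exact: (inhabits 0%N).
      + exact: leqnn.
      + by move=> i j k h1 h2; apply: leq_trans h1 h2.
      + by move=> i j; exists (maxn i j); rewrite leq_maxl leq_maxr.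
    - by move=> i j _; apply: mono_cont => x y; apply: pmap_mono.
    - by move=> i x; apply: pmap_id.
    - by move=> i j k ij jk x; apply: pmap_comp.
  move=> i j ij; split; first by apply: mono_cont => x y; apply: pmap_mono.
  exists (@pmap j i); split.
  - by apply: mono_cont => x y; apply: pmap_mono.
  - by move=> x; apply: pmap_section.
  - by move=> y; apply/specX; apply: pmap_below.
have facts : forall n, [/\ weakly_hausdorff (X n), compact_space (X n) & sober (X n)].
  by move=> n; split; [apply: WH_X | apply: compact_X | apply: sober_X].
have cof : has_countable_cofinal nat (fun m n : nat => (m <= n)%N).
  by exists setT; split; [exact: countableP | move=> i; exists i].
have use : forall C : topologicalType -> Prop, (forall n, C (X n)) ->
    (C L -> weakly_hausdorff L) -> ~ omega_projective C.
  move=> C hC hW H; apply: notWH_L; apply: hW.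
  exact: (H nat _ X _ (proj1 ep) cof hC L pi limit_L).
split.
- by apply: use => // n; case: (facts n).
- by apply: use => [n|[]] //; case: (facts n).
- by apply: use => [n|[]] //; case: (facts n).
- by apply: use => [n|[]] //; case: (facts n).
- exists X, (fun m n => @pmap m n); split => //.
  by exists L, pi; split; [exact: limit_L | exact: notWH_L].
Qed.
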